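(* Let $q$ be a prime power, $t\ge1$, $s<t$ a nonnegative integer, $\{u_1,\dots,u_t\}$ an $\mathbb{F}_q$-basis of $\mathbb{F}_{q^t}$, $W$ an arbitrary $\mathbb{F}_q$-subspace of $\mathbb{F}_{q^t}$ of dimension $s$, and $\alpha^*\in\mathbb{F}_{q^t}$. Let $L_W(x)=\prod_{w\in W}(x-w)$ and $g_i(x)=L_W\big(u_i(x-\alpha^* )\big)/(x-\alpha^* )$ for $i=1,\dots,t$ (a polynomial, since $L_W(0)=0$). Then $\{g_1(\alpha^* ),\dots,g_t(\alpha^* )\}$ has rank $t$ over $\mathbb{F}_q$. *)

(* Defs.v *)
From HB Require Import structures.
From mathcomp Require Import all_boot all_algebra all_field.
Set Implicit Arguments. Unset Strict Implicit. Unset Printing Implicit Defensive.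
Import GRing.Theory.
Local Open Scope ring_scope.

(* F = F_q (a finite field), L = F_{q^t} a finite-dimensional extension of F.
   finvect_type L is L equipped with its canonical finType structure. *)

Definition subspace_poly (F : finFieldType) (L : fieldExtType F)
  (W : {vspace L}) : {poly L} :=
  \prod_(w : finvect_type L | (w : L) \in W) ('X - (w : L)%:P).

Definition g_poly (F : finFieldType) (L : fieldExtType F)
  (W : {vspace L}) (a u : L) : {poly L} :=
  (subspace_poly W \Po (u%:P * ('X - a%:P))) %/ ('X - a%:P).

(* Main.v *)
Require Import Defs.
From HB Require Import structures.
From mathcomp Require Import all_boot all_algebra all_field.
Import GRing.Theory.
Local Open Scope ring_scope.

Lemma g_eval (F : finFieldType) (L : fieldExtType F) (W : {vspace L}) (a u : L) :
  (g_poly W a u).[a] =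
  u * \prod_(w : finvect_type L | ((w : L) \in W) && (w != 0)) (- (w : L)).
Proof.
rewrite /g_poly /subspace_poly (bigD1 (0 : finvect_type L)) ?mem0v //=.
set Q := \prod_(w : finvect_type L | _) _.
set r := u%:P * ('X - a%:P).
rewrite subr0 comp_polyM comp_polyX.
have -> : r * (Q \Po r) = ('X - a%:P) * (u%:P * (Q \Po r)).
  by rewrite /r mulrA [u%:P * _]mulrC.
rewrite mulKp ?polyXsubC_eq0 //.
rewrite hornerM hornerC horner_comp /r hornerM hornerC hornerXsubC subrr mulr0.
congr (_ * _); rewrite /Q horner_prod; apply: eq_bigr => w _.
by rewrite hornerXsubC sub0r.
Qed.

Theorem lemma7 (F : finFieldType) (L : fieldExtType F) (t s : nat)
  (ht : \dim {: L} = t) (u : t.-tuple L) (hu : basis_of fullv u)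
  (W : {vspace L}) (hW : \dim W = s) (hst : (s < t)%N) (a : L) :
  \dim <<[seq (g_poly W a ui).[a] | ui <- u]>>%VS = t.
Proof.
set c := \prod_(w : finvect_type L | ((w : L) \in W) && (w != 0)) (- (w : L)).
have c0 : c != 0.
  rewrite /c prodf_seq_neq0; apply/allP => w _; apply/implyP => /andP[_ ].
  by rewrite oppr_eq0.
have -> : [seq (g_poly W a ui).[a] | ui <- u] = map (amulr c) u.
  by apply: eq_map => ui; rewrite g_eval lfunE.
rewrite -limg_span limg_dim_eq.
  by move/andP: hu => [/eqP -> _]; rewrite ht.
apply/eqP; rewrite -subv0; apply/subvP => x /memv_capP[_].
rewrite memv_ker lfunE /= memv0 => /eqP/(congr1 (fun y => y / c)).
by rewrite mulfK // mul0r => ->.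
Qed.
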